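(* Let $(L,\omega,\upsilon)$ be a generalized indefinite string of class $\mathcal F$ with associated $R>0$. Then there exist $\varepsilon>0$ and a positive constant $c$ such that, as $y\to+\infty$, \[ \frac{\theta^{[1]}(\mathrm iy,R)}{\mathrm iy\,\theta(\mathrm iy,R)}=-\mathrm ic+\mathcal O(e^{-\varepsilon y}),\qquad\frac{\phi^{[1]}(\mathrm iy,R)}{\mathrm iy\,\phi(\mathrm iy,R)}=-\mathrm ic+\mathcal O(e^{-\varepsilon y}). \]
   Context: A generalized indefinite string is a triple $(L,\omega,\upsilon)$ with $L\in(0,\infty]$, $\omega$ a real distribution in $H^{-1}_{\mathrm{loc}}[0,L)$ and $\upsilon$ a non-negative Borel measure on $[0,L)$; $\mathsf w\in L^2_{\mathrm{loc}}[0,L)$ is the unique real function with $\omega(h)=-\int_0^L\mathsf w h'\,dx$ for compactly supported $h\in H^1[0,L)$; $\rho$ is the square root of the Radon--Nikodym derivative of $\upsilon$ and $\upsilon_{\mathrm s}$ its singular part (with respect to Lebesgue measure). A solution of $-f''=z\omega f+z^2\upsilon f$ is $f\in H^1_{\mathrm{loc}}[0,L)$ such that for some constant $f'(0-)$, $f'(0-)h(0)+\int_0^Lf'h'\,dx=z\omega(fh)+z^2\int fh\,d\upsilon$ for all such $h$. The fundamental system $\theta(z,\cdot),\phi(z,\cdot)$ consists of the solutions with $\theta(z,0)=1,\theta'(z,0-)=0,\phi(z,0)=0,\phi'(z,0-)=1$; quasi-derivatives $\theta^{[1]},\phi^{[1]}$ are the unique left-continuous functions equal a.e. to $\theta'+z\mathsf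 w\theta$, $\phi'+z\mathsf w\phi$. Class $\mathcal F$: $L=\infty$ and there is $R>0$ such that $\mathsf w=0$ a.e. on $[R,\infty)$; $\upsilon$ coincides on $[R,\infty)$ with the measure $dx/(1+2x)^2$; $\mathsf w$ and $\rho$ are a.e. equal to piecewise constant functions on $[0,R]$; $\upsilon_{\mathrm s}$ is supported on a finite set; and $\mathsf w=0$ and $\rho>0$ a.e. in a neighborhood of $R$. *)

(* Defs.v *)
From Stdlib Require Import Reals Lra.
Open Scope R_scope.

Definition Cx : Type := (R * R)%type.
Definition Cre (u : Cx) : R := fst u.
Definition Cim (u : Cx) : R := snd u.
Definition RtoC (x : R) : Cx := (x, 0).
Definition Cadd (u v : Cx) : Cx := (fst u + fst v, snd u + snd v).
Definition Copp (u : Cx) : Cx := (- fst u, - snd u).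
Definition Csub (u v : Cx) : Cx := Cadd u (Copp v).
Definition Cmul (u v : Cx) : Cx :=
  (fst u * fst v - snd u * snd v, fst u * snd v + snd u * fst v).
Definition Cnorm (u : Cx) : R := sqrt (fst u * fst u + snd u * snd u).
(* total inverse: inverse of 0 is 0 *)
Definition Cinv (u : Cx) : Cx :=
  let n2 := fst u * fst u + snd u * snd u in (fst u / n2, - snd u / n2).
Definition Cdiv (u v : Cx) : Cx := Cmul u (Cinv v).
Definition Ci : Cx := (0, 1).

Fixpoint Csum (n : nat) (F : nat -> Cx) : Cx :=
  match n with O => RtoC 0 | S m => Cadd (Csum m F) (F m) end.

Definition RInt (f : R -> R) (a b v : R) : Prop :=
  exists pr : Riemann_integrable f a b, RiemannInt pr = v.

Definition CInt (f : R -> Cx) (a b : R) (v : Cx) : Prop :=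
  RInt (fun x => fst (f x)) a b (fst v) /\ RInt (fun x => snd (f x)) a b (snd v).

(* L = infinity.  The measure upsilon is described by its Lebesgue decomposition
   upsilon = rho^2 dx + sum_{j < npts} masses j * delta_{pts j}
   (singular part supported on a finite set).  omega is determined by w via
   omega(h) = - int w h'. *)
Record classF : Type := {
  Rb : R;
  wf : R -> R;
  rho : R -> R;           (* sqrt of the Radon-Nikodym derivative of upsilon *)
  npts : nat;
  pts : nat -> R;
  masses : nat -> R;
  Rb_pos : 0 < Rb;
  rho_nonneg : forall x, 0 <= x -> 0 <= rho x;
  masses_nonneg : forall j, (j < npts)%nat -> 0 <= masses j;
  pts_range : forall j, (j < npts)%nat -> 0 <= pts j < Rb;
  w_tail : forall x, Rb < x -> wf x = 0;
  rho_tail : forall x, Rb < x -> rho x = / (1 + 2 * x);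
  piecewise_const : exists (n : nat) (t : nat -> R),
      t O = 0 /\ t n = Rb /\ (forall k, (k < n)%nat -> t k < t (S k)) /\
      (forall k, (k < n)%nat -> exists a b : R,
          forall x, t k < x < t (S k) -> wf x = a /\ rho x = b);
  near_Rb : exists d : R, 0 < d /\
      forall x, Rb - d < x < Rb -> wf x = 0 /\ 0 < rho x
}.

Definition H1loc (f fp : R -> Cx) : Prop :=
  forall x, 0 <= x -> CInt fp 0 x (Csub (f x) (f 0)).

(* f is a solution of  -f'' = z omega f + z^2 upsilon f  with f'(0-) = d *)
Definition is_solution (S : classF) (z : Cx) (f fp : R -> Cx) (d : Cx) : Prop :=
  H1loc f fp /\
  forall (h hp : R -> Cx) (K : R),
    0 <= K -> H1loc h hp -> (forall x, K <= x -> h x = RtoC 0) ->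
    exists A B D : Cx,
      CInt (fun x => Cmul (fp x) (hp x)) 0 K A /\
      CInt (fun x => Cmul (RtoC (wf S x))
                          (Cadd (Cmul (fp x) (h x)) (Cmul (f x) (hp x)))) 0 K B /\
      CInt (fun x => Cmul (RtoC (rho S x * rho S x)) (Cmul (f x) (h x))) 0 K D /\
      Cadd (Cmul d (h 0)) A =
      Cadd (Cmul z (Copp B))
           (Cmul (Cmul z z)
                 (Cadd D (Csum (npts S) (fun j =>
                     Cmul (RtoC (masses S j)) (Cmul (f (pts S j)) (h (pts S j))))))).

(* g is the quasi-derivative f^[1] = f' + z w f : left-continuous on (0,oo) and
   a.e. equal to f' + z w f (expressed through equality of all integrals) *)
Definition quasi_deriv (S : classF) (z : Cx) (f g : R -> Cx) : Prop :=
  (forall x, 0 < x -> forall e, 0 < e -> exists del, 0 < del /\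
      forall t, x - del < t < x -> Cnorm (Csub (g t) (g x)) < e) /\
  (forall a b, 0 <= a <= b -> exists J : Cx,
      CInt (fun t => Cmul (RtoC (wf S t)) (f t)) a b J /\
      CInt g a b (Cadd (Csub (f b) (f a)) (Cmul z J))).

(* Main.v *)
Require Import Defs.
From Stdlib Require Import Reals Lra Psatz Arith Lia.
From Coquelicot Require Import Coquelicot.
Import Defs.
Open Scope R_scope.


Lemma RInt_iff (f : R -> R) a b v : Defs.RInt f a b v <-> is_RInt f a b v.
Proof.
  split.
  - intros [pr <-]. rewrite <- RInt_Reals. exact (RInt_correct f a b (ex_RInt_Reals_1 _ _ _ pr)).
  - intros H. exists (ex_RInt_Reals_0 _ _ _ (ex_intro _ v H)).
    rewrite <- RInt_Reals. apply is_RInt_unique; exact H.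
Qed.

Lemma CInt_iff (f : R -> Cx) a b v : CInt f a b v <->
  is_RInt (fun x => fst (f x)) a b (fst v) /\ is_RInt (fun x => snd (f x)) a b (snd v).
Proof. unfold CInt. rewrite !RInt_iff. tauto. Qed.

Lemma iR_uniq (f : R -> R) a b (v1 v2 : R) : is_RInt f a b v1 -> is_RInt f a b v2 -> v1 = v2.
Proof. intros H1 H2. rewrite <- (is_RInt_unique _ _ _ _ H1). apply is_RInt_unique; auto. Qed.

Lemma RC (f : R -> R) a b : ex_RInt f a b -> is_RInt f a b (RInt.RInt f a b).
Proof. intros E. exact (RInt_correct f a b E). Qed.

Lemma iR_split (f : R -> R) a b c (v : R) : a <= b <= c -> is_RInt f a c v ->
  exists v1 v2, is_RInt f a b v1 /\ is_RInt f b c v2 /\ v = v1 + v2.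
Proof.
  intros Hb H.
  assert (E : ex_RInt f a c) by (exists v; exact H).
  pose proof (ex_RInt_Chasles_1 _ _ _ _ Hb E) as E1.
  pose proof (ex_RInt_Chasles_2 _ _ _ _ Hb E) as E2.
  exists (RInt.RInt f a b), (RInt.RInt f b c). split; [apply RC; auto|].
  split; [apply RC; auto|].
  apply (iR_uniq f a c). exact H.
  apply (is_RInt_Chasles f a b c); apply RC; auto.
Qed.

Lemma iR_ext_val (f g : R -> R) a b (v w : R) : a <= b ->
  (forall x, a < x < b -> f x = g x) -> is_RInt f a b v -> is_RInt g a b w -> v = w.
Proof.
  intros Hab He H1 H2. apply (iR_uniq g a b); auto.
  apply (is_RInt_ext f); auto. intros x Hx. apply He.
  rewrite Rmin_left in Hx by lra. rewrite Rmax_right in Hx by lra. lra.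
Qed.

Lemma iR_ext (f g : R -> R) a b (v : R) : a <= b ->
  (forall x, a < x < b -> f x = g x) -> is_RInt f a b v -> is_RInt g a b v.
Proof.
  intros Hab He H1. apply (is_RInt_ext f); auto. intros x Hx. apply He.
  rewrite Rmin_left in Hx by lra. rewrite Rmax_right in Hx by lra. lra.
Qed.

Lemma iR_const_val (f : R -> R) a b c (v : R) : a <= b ->
  (forall x, a < x < b -> f x = c) -> is_RInt f a b v -> v = c * (b - a).
Proof.
  intros Hab He H. apply (iR_ext_val f (fun _ => c) a b); auto.
  pose proof (is_RInt_const a b c) as K. unfold scal in K; simpl in K.
  unfold mult in K; simpl in K. replace (c * (b - a)) with ((b - a) * c) by ring. exact K.
Qed.

Lemma iR_const (c a b : R) : is_RInt (fun _ => c) a b (c * (b - a)).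
Proof.
  pose proof (is_RInt_const a b c) as K. unfold scal in K; simpl in K.
  unfold mult in K; simpl in K. replace (c * (b - a)) with ((b - a) * c) by ring. exact K.
Qed.

Lemma iR_scal (f : R -> R) a b c (v : R) : is_RInt f a b v -> is_RInt (fun x => c * f x) a b (c * v).
Proof. intros H. apply (is_RInt_scal f a b c v H). Qed.

Lemma iR_plus (f g : R -> R) a b (v w : R) : is_RInt f a b v -> is_RInt g a b w ->
  is_RInt (fun x => f x + g x) a b (v + w).
Proof. intros H1 H2. apply (is_RInt_plus f g a b v w H1 H2). Qed.

Lemma iR_minus (f g : R -> R) a b (v w : R) : is_RInt f a b v -> is_RInt g a b w ->
  is_RInt (fun x => f x - g x) a b (v - w).
Proof. intros H1 H2. apply (is_RInt_minus f g a b v w H1 H2). Qed.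

Lemma iR_le (f g : R -> R) a b (v w : R) : a <= b -> (forall x, a < x < b -> f x <= g x) ->
  is_RInt f a b v -> is_RInt g a b w -> v <= w.
Proof. intros. eapply is_RInt_le; eauto. Qed.

Lemma iR_nonneg (f : R -> R) a b (v : R) : a <= b -> (forall x, a < x < b -> 0 <= f x) ->
  is_RInt f a b v -> 0 <= v.
Proof.
  intros Hab H Hv. replace 0 with (0 * (b - a)) by ring.
  apply (iR_le (fun _ => 0) f a b); auto. apply iR_const.
Qed.

Definition Gx (m q c t : R) := exp (m * t + q) * ((t - c) / m - 1 / (m * m)).

Lemma int_exp_lin m q c a b : m <> 0 ->
  is_RInt (fun t => exp (m * t + q) * (t - c)) a b (Gx m q c b - Gx m q c a).
Proof.
  intros Hm.
  apply (is_RInt_derive (Gx m q c) (fun t => exp (m * t + q) * (t - c))).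
  - intros x _. unfold Gx. auto_derive; auto. field. auto.
  - intros x _. apply (ex_derive_continuous (K:=R_AbsRing) (V:=R_NormedModule)). auto_derive. auto.
Qed.

Definition cp (c : bool) (u : Cx) : R := if c then fst u else snd u.

Lemma CInt_cp (f : R -> Cx) a b v : CInt f a b v -> forall c, is_RInt (fun x => cp c (f x)) a b (cp c v).
Proof. intros H c. apply CInt_iff in H. destruct H, c; simpl; auto. Qed.

Lemma H1_seg f fp : H1loc f fp -> forall c a b, 0 <= a <= b ->
  is_RInt (fun x => cp c (fp x)) a b (cp c (f b) - cp c (f a)).
Proof.
  intros H c a b Hab.
  pose proof (CInt_cp _ _ _ _ (H a ltac:(lra)) c) as Ha.
  pose proof (CInt_cp _ _ _ _ (H b ltac:(lra)) c) as Hb.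
  destruct (iR_split _ 0 a b _ ltac:(lra) Hb) as (v1 & v2 & H1 & H2 & E).
  replace (cp c (f b) - cp c (f a)) with v2; auto.
  pose proof (iR_uniq _ _ _ _ _ Ha H1) as E1.
  destruct c; simpl in *; lra.
Qed.

Lemma H1_cont f fp : H1loc f fp -> forall c x, 0 < x -> continuity_pt (fun t => cp c (f t)) x.
Proof.
  intros H c x Hx.
  assert (Hc : continuous (fun z => cp c (f z) - cp c (f 0)) x).
  { apply (continuous_RInt_1 (fun t => cp c (fp t)) 0 x).
    apply (locally_interval _ x 0 p_infty); simpl; auto.
    intros z Hz _. replace (cp c (f z) - cp c (f 0)) with (cp c (f z) - cp c (f 0)) by ring.
    pose proof (H1_seg f fp H c 0 z ltac:(lra)). auto. }
  apply continuity_pt_filterlim in Hc.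
  apply (continuity_pt_ext (fun z => (cp c (f z) - cp c (f 0)) + cp c (f 0))).
  intros; ring.
  apply continuity_pt_plus; auto. apply continuity_pt_const. intros u v; auto.
Qed.



Lemma iR_chasles (f : R -> R) a b c (v w : R) : is_RInt f a b v -> is_RInt f b c w -> is_RInt f a c (v + w).
Proof. intros H1 H2. exact (is_RInt_Chasles f a b c v w H1 H2). Qed.

Lemma iR_pc (g : R -> R) a b c : a <= b -> (forall x, a < x < b -> g x = c) -> is_RInt g a b (c * (b - a)).
Proof. intros Hab H. apply (iR_ext (fun _ => c)); auto. intros; symmetry; auto. apply iR_const. Qed.

Lemma iR_val (f : R -> R) a b (v w : R) : v = w -> is_RInt f a b v -> is_RInt f a b w.
Proof. intros ->; auto. Qed.

Lemma H1_real (F g : R -> R) : (forall X, 0 <= X -> is_RInt g 0 X (F X - F 0)) ->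
  H1loc (fun t => RtoC (F t)) (fun t => RtoC (g t)).
Proof.
  intros H X HX. apply CInt_iff; simpl. split.
  - apply H; auto.
  - refine (iR_val _ _ _ (0*(X-0)) _ _ (iR_const 0 0 X)). ring.
Qed.

Definition hat x0 d t := if Rle_dec t (x0 - d) then 0 else if Rle_dec t x0 then (t - (x0 - d)) / d
  else if Rle_dec t (x0 + d) then (x0 + d - t) / d else 0.
Definition hatp x0 d t := if Rlt_dec t (x0 - d) then 0 else if Rlt_dec t x0 then 1 / d
  else if Rlt_dec t (x0 + d) then - 1 / d else 0.

Ltac dec := repeat match goal with
  | |- context [Rle_dec ?a ?b] => destruct (Rle_dec a b)
  | |- context [Rlt_dec ?a ?b] => destruct (Rlt_dec a b) end; try lra.

Lemma hat_int x0 d : 0 < d -> 0 < x0 - d -> forall X, 0 <= X ->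
  is_RInt (hatp x0 d) 0 X (hat x0 d X - hat x0 d 0).
Proof.
  intros Hd Ha X HX.
  assert (H0 : hat x0 d 0 = 0) by (unfold hat; dec).
  rewrite H0.
  assert (I1 : forall Y, 0 <= Y <= x0 - d -> is_RInt (hatp x0 d) 0 Y 0).
  { intros Y HY. apply (iR_val _ _ _ (0 * (Y - 0))). ring.
    apply iR_pc. lra. intros x Hx. unfold hatp; dec. }
  assert (I2 : forall Y, x0 - d <= Y <= x0 -> is_RInt (hatp x0 d) (x0 - d) Y (1/d * (Y - (x0 - d)))).
  { intros Y HY. apply iR_pc. lra. intros x Hx. unfold hatp; dec. }
  assert (I3 : forall Y, x0 <= Y <= x0 + d -> is_RInt (hatp x0 d) x0 Y (-1/d * (Y - x0))).
  { intros Y HY. apply iR_pc. lra. intros x Hx. unfold hatp; dec. }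
  assert (I4 : forall Y, x0 + d <= Y -> is_RInt (hatp x0 d) (x0 + d) Y (0 * (Y - (x0 + d)))).
  { intros Y HY. apply iR_pc. lra. intros x Hx. unfold hatp; dec. }
  destruct (Rle_dec X (x0 - d)).
  - replace (hat x0 d X - 0) with 0 by (unfold hat; dec). apply I1; lra.
  - destruct (Rle_dec X x0).
    + replace (hat x0 d X - 0) with (0 + 1/d * (X - (x0 - d))) by (unfold hat; dec; field; lra).
      apply iR_chasles with (x0 - d). apply I1; lra. apply I2; lra.
    + destruct (Rle_dec X (x0 + d)).
      * replace (hat x0 d X - 0) with (0 + 1/d * (x0 - (x0 - d)) + -1/d * (X - x0)) by (unfold hat; dec; field; lra).
        apply iR_chasles with x0. apply iR_chasles with (x0 - d). apply I1; lra. apply I2; lra. apply I3; lra.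
      * replace (hat x0 d X - 0) with (0 + 1/d * (x0 - (x0 - d)) + -1/d * (x0 + d - x0) + 0 * (X - (x0 + d))) by (unfold hat; dec; field; lra).
        apply iR_chasles with (x0 + d). apply iR_chasles with x0. apply iR_chasles with (x0 - d).
        apply I1; lra. apply I2; lra. apply I3; lra. apply I4; lra.
Qed.

Lemma hat_H1 x0 d : 0 < d -> 0 < x0 - d ->
  H1loc (fun t => RtoC (hat x0 d t)) (fun t => RtoC (hatp x0 d t)).
Proof. intros. apply H1_real. apply hat_int; auto. Qed.



Lemma maxpts (p : nat -> R) (Rb : R) (N : nat) : 0 < Rb -> (forall j, (j < N)%nat -> p j < Rb) ->
  exists m, 0 <= m < Rb /\ forall j, (j < N)%nat -> p j <= m.
Proof.
  intros HR. induction N as [|N IH]; intros H.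
  - exists 0. split. lra. intros j Hj. lia.
  - destruct IH as (m & Hm & Hj). intros j Hj; apply H; lia.
    exists (Rmax m (p N)). split.
    + split. apply Rle_trans with m. lra. apply Rmax_l. apply Rmax_lub_lt. lra. apply H; lia.
    + intros j Hj'. destruct (Nat.eq_dec j N) as [->|Hne]. apply Rmax_r.
      apply Rle_trans with m. apply Hj; lia. apply Rmax_l.
Qed.

Lemma setup S : exists s0 b t1 a0, 0 <= s0 < Rb S /\ 0 < b /\
  (forall x, s0 < x < Rb S -> wf S x = 0 /\ rho S x = b) /\
  (forall j, (j < npts S)%nat -> 0 <= pts S j < s0) /\ 0 < t1 /\
  (forall x, 0 < x < t1 -> wf S x = a0).
Proof.
  destruct (piecewise_const S) as (n & t & Ht0 & Htn & Hinc & Hpc).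
  destruct (near_Rb S) as (d & Hd & Hnear).
  pose proof (Rb_pos S) as HR.
  destruct (maxpts (pts S) (Rb S) (npts S) HR) as (m & Hm & Hmj).
  { intros j Hj. apply (pts_range S j Hj). }
  destruct n as [|n']. { rewrite Ht0 in Htn. lra. }
  destruct (Hpc n' ltac:(lia)) as (a & b' & Hab).
  destruct (Hpc 0%nat ltac:(lia)) as (a0 & b0 & H0).
  pose proof (Hinc n' ltac:(lia)) as Hl. rewrite Htn in Hl.
  pose proof (Hinc 0%nat ltac:(lia)) as H01. rewrite Ht0 in H01.
  set (s0 := Rmax (Rmax (t n') (Rb S - d)) ((m + Rb S) / 2)).
  assert (Hs1 : t n' <= s0) by (unfold s0; eapply Rle_trans; [apply Rmax_l|apply Rmax_l]).
  assert (Hs2 : Rb S - d <= s0) by (unfold s0; eapply Rle_trans; [apply Rmax_r|apply Rmax_l]).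
  assert (Hs3 : (m + Rb S)/2 <= s0) by (unfold s0; apply Rmax_r).
  assert (Hs4 : s0 < Rb S).
  { unfold s0. apply Rmax_lub_lt. apply Rmax_lub_lt; lra. lra. }
  set (x1 := (s0 + Rb S) / 2).
  destruct (Hab x1 ltac:(unfold x1; lra)) as [Ha1 Hb1].
  destruct (Hnear x1 ltac:(unfold x1; lra)) as [Hw1 Hr1].
  exists s0, b', (t 1%nat), a0.
  split. lra. split. rewrite Hb1 in Hr1; lra. split.
  { intros x Hx. destruct (Hab x ltac:(lra)) as [E E']. destruct (Hnear x ltac:(lra)) as [E2 _]. split; auto. }
  split. { intros j Hj. pose proof (Hmj j Hj). pose proof (pts_range S j Hj). lra. }
  split. lra.
  intros x Hx. destruct (H0 x ltac:(rewrite Ht0; lra)) as [E _]. exact E.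
Qed.



Lemma cp_mulR c u r : cp c (Cmul u (RtoC r)) = cp c u * r.
Proof. destruct c; simpl; ring. Qed.
Lemma cp_Rmul c u r : cp c (Cmul (RtoC r) u) = r * cp c u.
Proof. destruct c; simpl; ring. Qed.
Lemma cp_add c u v : cp c (Cadd u v) = cp c u + cp c v.
Proof. destruct c; simpl; ring. Qed.
Lemma cp_zz c y u : cp c (Cmul (Cmul (0, y) (0, y)) u) = - (y * y) * cp c u.
Proof. destruct c; simpl; ring. Qed.

Lemma Csum_zero n F : (forall j, (j < n)%nat -> fst (F j) = 0 /\ snd (F j) = 0) ->
  fst (Csum n F) = 0 /\ snd (Csum n F) = 0.
Proof.
  induction n; intros H; simpl. lra.
  destruct IHn as [H1 H2]. intros; apply H; lia.
  destruct (H n ltac:(lia)). lra.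
Qed.

Lemma Csum_zero_cp n F c : (forall j, (j < n)%nat -> fst (F j) = 0 /\ snd (F j) = 0) ->
  cp c (Csum n F) = 0.
Proof. intros H. destruct (Csum_zero n F H). destruct c; simpl; auto. Qed.

Lemma hat_ident S y f fp d s0 b : 0 < y -> is_solution S (0, y) f fp d -> 0 <= s0 ->
  (forall x, s0 < x < Rb S -> wf S x = 0 /\ rho S x = b) -> b <> 0 ->
  (forall j, (j < npts S)%nat -> pts S j < s0) ->
  forall x0 dl, 0 < dl -> s0 < x0 - dl -> x0 + dl < Rb S -> forall c,
  exists v, is_RInt (fun t => cp c (f t) * hat x0 dl t) (x0 - dl) (x0 + dl) v /\
    cp c (f (x0 + dl)) - 2 * cp c (f x0) + cp c (f (x0 - dl)) = dl * ((y * b) * (y * b)) * v.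
Proof.
  intros Hy [H1f Heq] Hs0 Hreg Hb Hpts x0 dl Hdl Hl Hr c.
  destruct (Heq (fun t => RtoC (hat x0 dl t)) (fun t => RtoC (hatp x0 dl t)) (x0 + dl)
     ltac:(lra) (hat_H1 x0 dl Hdl ltac:(lra))) as (A & B & D & HA & HB & HD & E).
  { intros x Hx. replace (hat x0 dl x) with 0. reflexivity. unfold hat. dec. assert (x = x0 + dl) by lra. subst. field. lra. }
  apply (f_equal (cp c)) in E.
  rewrite !cp_add, cp_zz, cp_add in E.
  assert (HB0 : forall c', cp c' B = 0).
  { intros c'. pose proof (CInt_cp _ _ _ _ HB c') as HBc.
    symmetry. apply (iR_const_val _ 0 (x0 + dl) 0) in HBc. lra. lra.
    intros x Hx. destruct (Rlt_dec x (x0 - dl)).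
    - unfold hat, hatp. destruct (Rle_dec x (x0 - dl)); [|lra]. destruct (Rlt_dec x (x0 - dl)); [|lra].
      destruct c'; simpl; ring.
    - destruct (Hreg x ltac:(lra)) as [Hw _]. rewrite Hw. destruct c'; simpl; ring. }
  assert (EB : cp c (Cmul (0, y) (Defs.Copp B)) = 0).
  { pose proof (HB0 true); pose proof (HB0 false); destruct c; simpl in *; rewrite H, H0; ring. }
  rewrite EB in E.
  rewrite Csum_zero_cp in E.
  2:{ intros j Hj. pose proof (Hpts j Hj). assert (hat x0 dl (pts S j) = 0) by (unfold hat; dec).
      rewrite H0; simpl; split; ring. }
  assert (Eh0 : cp c (Cmul d (RtoC (hat x0 dl 0))) = 0).
  { assert (hat x0 dl 0 = 0) by (unfold hat; dec). rewrite H. destruct c; simpl; ring. }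
  rewrite Eh0 in E.
  pose proof (CInt_cp _ _ _ _ HA c) as HAc.
  destruct (iR_split _ 0 (x0 - dl) (x0 + dl) _ ltac:(lra) HAc) as (a1 & a23 & Ha1 & Ha23 & Ea).
  destruct (iR_split _ (x0 - dl) x0 (x0 + dl) _ ltac:(lra) Ha23) as (a2 & a3 & Ha2 & Ha3 & Ea').
  assert (Ea1 : a1 = 0).
  { assert (a1 = 0 * (x0 - dl - 0)). eapply iR_const_val; [lra| |exact Ha1]. intros x Hx.
    unfold hatp. dec. rewrite cp_mulR. ring. lra. }
  assert (Ea2 : a2 = 1 / dl * (cp c (f x0) - cp c (f (x0 - dl)))).
  { eapply (iR_ext_val _ (fun t => 1 / dl * cp c (fp t)) (x0 - dl) x0); [lra| |exact Ha2|].
    intros x Hx. cbv beta. rewrite cp_mulR. unfold hatp. dec; try ring.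
    apply iR_scal. apply H1_seg; auto. lra. }
  assert (Ea3 : a3 = -1 / dl * (cp c (f (x0 + dl)) - cp c (f x0))).
  { eapply (iR_ext_val _ (fun t => -1 / dl * cp c (fp t)) x0 (x0 + dl)); [lra| |exact Ha3|].
    intros x Hx. cbv beta. rewrite cp_mulR. unfold hatp. dec; try ring.
    apply iR_scal. apply H1_seg; auto. lra. }
  pose proof (CInt_cp _ _ _ _ HD c) as HDc.
  destruct (iR_split _ 0 (x0 - dl) (x0 + dl) _ ltac:(lra) HDc) as (e1 & e2 & He1 & He2 & Ed).
  assert (Ee1 : e1 = 0).
  { assert (e1 = 0 * (x0 - dl - 0)). eapply iR_const_val; [lra| |exact He1]. intros x Hx.
    unfold hat. dec. rewrite cp_Rmul, cp_mulR. ring. lra. }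
  exists (e2 / (b * b)). split.
  - apply (iR_ext (fun t => / (b * b) * cp c (Cmul (RtoC (rho S t * rho S t)) (Cmul (f t) (RtoC (hat x0 dl t)))))).
    lra. intros x Hx. cbv beta. destruct (Hreg x ltac:(lra)) as [_ Hrho]. rewrite Hrho, cp_Rmul, cp_mulR. field. auto.
    replace (e2 / (b * b)) with (/ (b * b) * e2) by (field; auto). apply iR_scal; auto.
  - replace (dl * (y * b * (y * b)) * (e2 / (b * b))) with (dl * (y * y) * e2) by (field; auto).
    assert (cp c A = - (y * y) * cp c D) by lra.
    rewrite Ea, Ea', Ed, Ea1, Ea2, Ea3, Ee1 in H. field_simplify in H. 2: lra.
    apply (Rmult_eq_reg_l (/ dl)). 2: apply Rinv_neq_0_compat; lra. field_simplify. 2: lra.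
    field_simplify in H; try lra. nra.
Qed.



Lemma int_lin al be a b : is_RInt (fun t => al * t + be) a b (al * (b * b - a * a) / 2 + be * (b - a)).
Proof.
  apply (iR_val _ _ _ ((al * b * b / 2 + be * b) - (al * a * a / 2 + be * a))). field.
  apply (is_RInt_derive (fun t => al * t * t / 2 + be * t) (fun t => al * t + be)).
  - intros x _. auto_derive; auto. field.
  - intros x _. apply (ex_derive_continuous (K:=R_AbsRing) (V:=R_NormedModule)). auto_derive. auto.
Qed.

Lemma hat_nonneg x0 dl t : 0 < dl -> 0 <= hat x0 dl t.
Proof.
  intros Hd. unfold hat. dec; unfold Rdiv; apply Rmult_le_pos; try lra;
  left; apply Rinv_0_lt_compat; lra.
Qed.

Lemma hat_int1 x0 dl : 0 < dl -> is_RInt (hat x0 dl) (x0 - dl) (x0 + dl) dl.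
Proof.
  intros Hd.
  apply (iR_val _ _ _ ((1/dl * (x0 * x0 - (x0 - dl) * (x0 - dl)) / 2 + (-(x0 - dl)/dl) * (x0 - (x0 - dl)))
     + ((-1/dl) * ((x0 + dl) * (x0 + dl) - x0 * x0) / 2 + ((x0 + dl)/dl) * (x0 + dl - x0)))).
  field. lra.
  apply iR_chasles with x0.
  - apply (iR_ext (fun t => 1/dl * t + (-(x0 - dl)/dl))). lra. intros x Hx. unfold hat. dec; try (field; lra).
    apply int_lin.
  - apply (iR_ext (fun t => -1/dl * t + ((x0 + dl)/dl))). lra. intros x Hx. unfold hat. dec; try (field; lra).
    apply int_lin.
Qed.

Lemma maxp (u : R -> R) a c K2 : a < c -> 0 < K2 -> (forall x, a <= x <= c -> continuity_pt u x) ->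
  u a <= 0 -> u c <= 0 ->
  (forall x0 dl, 0 < dl -> a < x0 - dl -> x0 + dl < c -> exists v,
     is_RInt (fun t => u t * hat x0 dl t) (x0 - dl) (x0 + dl) v /\
     u (x0 + dl) - 2 * u x0 + u (x0 - dl) = dl * K2 * v) ->
  forall x, a <= x <= c -> u x <= 0.
Proof.
  intros Hac HK Hc Ha Hcc Hid x Hx.
  destruct (Rle_dec (u x) 0) as [|Hpos]; auto. exfalso.
  destruct (continuity_ab_maj u a c ltac:(lra) Hc) as (M & HM & HMr).
  pose proof (HM x Hx) as HMx.
  assert (HaM : a < M) by (destruct (Req_dec a M); [subst; lra | lra]).
  assert (HMc : M < c) by (destruct (Req_dec M c); [subst; lra | lra]).
  set (uM := u M).
  destruct (Hc M HMr (uM / 2) ltac:(unfold uM; lra)) as (eta & Heta & Hnear).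
  assert (Hn : forall t, Rabs (t - M) < eta -> uM / 2 < u t).
  { intros t Ht. destruct (Req_dec t M) as [->|Hne]. unfold uM; lra.
    pose proof (Hnear t (conj (conj I (not_eq_sym Hne)) Ht)) as H. simpl in H. unfold R_dist in H.
    unfold uM in *. apply Rabs_def2 in H. lra. }
  set (dl := Rmin (eta / 2) (Rmin ((M - a) / 2) ((c - M) / 2))).
  assert (Hdl1 : dl <= eta / 2) by apply Rmin_l.
  assert (Hdl2 : dl <= (M - a) / 2) by (eapply Rle_trans; [apply Rmin_r|apply Rmin_l]).
  assert (Hdl3 : dl <= (c - M) / 2) by (eapply Rle_trans; [apply Rmin_r|apply Rmin_r]).
  assert (Hdl0 : 0 < dl).
  { unfold dl. apply Rmin_pos. lra. apply Rmin_pos; lra. }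
  destruct (Hid M dl Hdl0 ltac:(lra) ltac:(lra)) as (v & Hv & E).
  assert (Hlow : uM / 2 * dl <= v).
  { apply (iR_le (fun t => uM / 2 * hat M dl t) (fun t => u t * hat M dl t) (M - dl) (M + dl)); auto.
    lra. intros t Ht. apply Rmult_le_compat_r. apply hat_nonneg; lra.
    left. apply Hn. apply Rabs_def1; lra.
    apply iR_scal. apply hat_int1; auto. }
  assert (u (M + dl) <= uM) by (apply HM; lra).
  assert (u (M - dl) <= uM) by (apply HM; lra).
  assert (0 < dl * K2 * v).
  { apply Rmult_lt_0_compat. apply Rmult_lt_0_compat; lra. unfold uM in *. nra. }
  unfold uM in *. lra.
Qed.



Definition Ec k s P Q t := P * exp (k * t + - (k * s)) + Q * exp ((- k) * t + k * s).

Lemma exp_lin2 k q1 q2 P Q c a b : k <> 0 ->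
  is_RInt (fun t => P * (exp (k * t + q1) * (t - c)) + Q * (exp ((-k) * t + q2) * (t - c))) a b
    (P * (Gx k q1 c b - Gx k q1 c a) + Q * (Gx (-k) q2 c b - Gx (-k) q2 c a)).
Proof.
  intros Hk. apply iR_plus; apply iR_scal; apply int_exp_lin; auto. lra.
Qed.

Lemma Ec_hat k s P Q x0 dl : k <> 0 -> 0 < dl ->
  is_RInt (fun t => Ec k s P Q t * hat x0 dl t) (x0 - dl) (x0 + dl)
    ((Ec k s P Q (x0 + dl) - 2 * Ec k s P Q x0 + Ec k s P Q (x0 - dl)) / (k * k * dl)).
Proof.
  intros Hk Hd.
  pose proof (exp_lin2 k (-(k*s)) (k*s) (P/dl) (Q/dl) (x0 - dl) (x0 - dl) x0 Hk) as H1.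
  pose proof (exp_lin2 k (-(k*s)) (k*s) (-P/dl) (-Q/dl) (x0 + dl) x0 (x0 + dl) Hk) as H2.
  assert (L : is_RInt (fun t => Ec k s P Q t * hat x0 dl t) (x0 - dl) x0
     (P / dl * (Gx k (- (k * s)) (x0 - dl) x0 - Gx k (- (k * s)) (x0 - dl) (x0 - dl)) +
      Q / dl * (Gx (- k) (k * s) (x0 - dl) x0 - Gx (- k) (k * s) (x0 - dl) (x0 - dl)))).
  { eapply iR_ext; [lra| |exact H1]. intros x Hx. unfold hat, Ec. dec; try (field; lra). }
  assert (Rr : is_RInt (fun t => Ec k s P Q t * hat x0 dl t) x0 (x0 + dl)
     (- P / dl * (Gx k (- (k * s)) (x0 + dl) (x0 + dl) - Gx k (- (k * s)) (x0 + dl) x0) +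
      - Q / dl * (Gx (- k) (k * s) (x0 + dl) (x0 + dl) - Gx (- k) (k * s) (x0 + dl) x0))).
  { eapply iR_ext; [lra| |exact H2]. intros x Hx. unfold hat, Ec. dec; try (field; lra). }
  eapply iR_val; [|apply (iR_chasles _ _ _ _ _ _ L Rr)].
  unfold Gx, Ec. field. split; auto. lra.
Qed.

Lemma Ec_cont k s P Q x : continuity_pt (Ec k s P Q) x.
Proof.
  apply continuity_pt_filterlim.
  apply (ex_derive_continuous (K:=R_AbsRing) (V:=R_NormedModule)). unfold Ec. auto_derive. auto.
Qed.

Lemma exp0' a : exp (a + - a) = 1.
Proof. replace (a + - a) with 0 by ring. apply exp_0. Qed.

Lemma Ec_s k s P Q : Ec k s P Q s = P + Q.
Proof.
  unfold Ec. replace (- k * s + k * s) with (k * s + - (k * s)) by ring. rewrite exp0'. ring.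
Qed.

Lemma sol_explicit S y f fp d s0 b s : 0 < y -> is_solution S (0, y) f fp d -> 0 <= s0 ->
  (forall x, s0 < x < Rb S -> wf S x = 0 /\ rho S x = b) -> 0 < b ->
  (forall j, (j < npts S)%nat -> pts S j < s0) -> s0 < s < Rb S ->
  forall c, exists P Q, forall t, s <= t <= Rb S -> cp c (f t) = Ec (y * b) s P Q t.
Proof.
  intros Hy Hsol Hs0 Hreg Hb Hpts Hs c.
  pose proof Hsol as [H1f _].
  set (k := y * b). assert (Hk : 0 < k) by (unfold k; nra).
  set (e1 := exp (k * Rb S + - (k * s))). set (e2 := exp (- k * Rb S + k * s)).
  assert (He : e2 < e1) by (unfold e1, e2; apply exp_increasing; nra).
  set (F0 := cp c (f s)). set (F1 := cp c (f (Rb S))).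
  set (P := (F1 - F0 * e2) / (e1 - e2)). set (Q := F0 - P).
  exists P, Q.
  set (u := fun t => cp c (f t) - Ec k s P Q t).
  assert (Hua : u s = 0) by (unfold u; rewrite Ec_s; unfold Q, F0; ring).
  assert (Hub : u (Rb S) = 0).
  { unfold u, Ec. fold e1 e2. unfold Q, P, F1. field. lra. }
  assert (Hcont : forall x, s <= x <= Rb S -> continuity_pt u x).
  { intros x Hx. apply continuity_pt_minus. apply (H1_cont f fp H1f c x). lra. apply Ec_cont. }
  assert (Hid : forall sg : R, (sg = 1 \/ sg = -1) -> forall x0 dl, 0 < dl -> s < x0 - dl -> x0 + dl < Rb S -> exists v,
     is_RInt (fun t => sg * u t * hat x0 dl t) (x0 - dl) (x0 + dl) v /\
     sg * u (x0 + dl) - 2 * (sg * u x0) + sg * u (x0 - dl) = dl * (k * k) * v).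
  { intros sg Hsg x0 dl Hdl Hl Hr.
    destruct (hat_ident S y f fp d s0 b Hy Hsol Hs0 Hreg ltac:(lra) Hpts x0 dl Hdl ltac:(lra) Hr c)
      as (v1 & Hv1 & E1).
    pose proof (Ec_hat k s P Q x0 dl ltac:(lra) Hdl) as HE.
    eexists. split.
    - apply iR_scal with (c := sg) in Hv1. apply iR_scal with (c := sg) in HE.
      eapply iR_ext; [lra| |exact (iR_minus _ _ _ _ _ _ Hv1 HE)].
      intros x Hx. unfold u. cbv beta. ring.
    - unfold u. fold k in E1.
      set (Ed := Ec k s P Q (x0 + dl) - 2 * Ec k s P Q x0 + Ec k s P Q (x0 - dl)).
      assert (X : dl * (k * k) * (sg * v1 - sg * (Ed / (k * k * dl))) = sg * (dl * (k * k) * v1) - sg * Ed)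
        by (field; lra).
      rewrite X, <- E1. unfold Ed. ring. }
  intros t Ht.
  assert (A1 : u t <= 0).
  { apply (maxp u s (Rb S) (k * k)); auto. lra. nra. lra. lra.
    intros x0 dl Hdl Hl Hr. destruct (Hid 1 (or_introl eq_refl) x0 dl Hdl Hl Hr) as (v & Hv & E).
    exists v. split. eapply iR_ext; [lra| |exact Hv]. intros; cbv beta; ring. lra. }
  assert (A2 : - u t <= 0).
  { apply (maxp (fun t => - u t) s (Rb S) (k * k)); auto. lra. nra.
    intros x Hx. apply continuity_pt_opp. auto. lra. lra.
    intros x0 dl Hdl Hl Hr. destruct (Hid (-1) (or_intror eq_refl) x0 dl Hdl Hl Hr) as (v & Hv & E).
    exists v. split. eapply iR_ext; [lra| |exact Hv]. intros; cbv beta; ring. lra. }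
  unfold u in A1, A2. fold k. lra.
Qed.



Definition cj (u : Cx) : Cx := (fst u, - snd u).
Definition sgc (c : bool) : R := if c then 1 else -1.

Lemma cp_cj c u : cp c (cj u) = sgc c * cp c u.
Proof. destruct c; simpl; ring. Qed.

Lemma CInt_of_cp (g : R -> Cx) a b v : (forall c, is_RInt (fun x => cp c (g x)) a b (cp c v)) -> CInt g a b v.
Proof. intros H. apply CInt_iff. split; [apply (H true) | apply (H false)]. Qed.

Lemma Cx_ext (u v : Cx) : fst u = fst v -> snd u = snd v -> u = v.
Proof. destruct u, v; simpl; intros -> ->; auto. Qed.

Definition hE (f : R -> Cx) s K t := if Rle_dec t s then cj (f t) else if Rle_dec t K then
   Cmul (cj (f s)) (RtoC ((K - t) / (K - s))) else RtoC 0.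
Definition hpE (fp : R -> Cx) (f : R -> Cx) s K t := if Rlt_dec t s then cj (fp t) else if Rlt_dec t K then
   Cmul (cj (f s)) (RtoC (-1 / (K - s))) else RtoC 0.

Lemma hE_H1 f fp s K : H1loc f fp -> 0 < s < K -> H1loc (hE f s K) (hpE fp f s K).
Proof.
  intros H1 Hs X HX. apply CInt_of_cp. intros c.
  assert (I1 : forall Y, 0 <= Y <= s -> is_RInt (fun x => cp c (hpE fp f s K x)) 0 Y
             (sgc c * (cp c (f Y) - cp c (f 0)))).
  { intros Y HY. eapply iR_ext; [lra| |apply iR_scal; apply (H1_seg f fp H1 c 0 Y); lra].
    intros x Hx. cbv beta. unfold hpE. dec. rewrite cp_cj. ring. }
  assert (I2 : forall Y, s <= Y <= K -> is_RInt (fun x => cp c (hpE fp f s K x)) s Y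
             ((sgc c * cp c (f s) * (-1 / (K - s))) * (Y - s))).
  { intros Y HY. apply iR_pc. lra. intros x Hx. unfold hpE. dec. rewrite cp_mulR, cp_cj. ring. }
  assert (I3 : forall Y, K <= Y -> is_RInt (fun x => cp c (hpE fp f s K x)) K Y (0 * (Y - K))).
  { intros Y HY. apply iR_pc. lra. intros x Hx. unfold hpE. dec. destruct c; simpl; ring. }
  assert (E0 : hE f s K 0 = cj (f 0)) by (unfold hE; dec; reflexivity).
  destruct (Rle_dec X s).
  - eapply iR_val; [|apply I1; lra]. unfold Csub, Cadd, Copp. rewrite E0. unfold hE. dec.
    destruct c; simpl; ring.
  - destruct (Rle_dec X K).
    + eapply iR_val; [|apply iR_chasles with s; [apply I1|apply I2]; lra].
      unfold Csub, Cadd, Copp. rewrite E0. unfold hE. dec. destruct c; simpl; field; lra.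
    + eapply iR_val; [|apply iR_chasles with K; [apply iR_chasles with s; [apply I1|apply I2]|apply I3]; lra].
      unfold Csub, Cadd, Copp. rewrite E0. unfold hE. dec. destruct c; simpl; field; lra.
Qed.

Lemma Csum_fst_nonneg n F : (forall j, (j < n)%nat -> 0 <= fst (F j)) -> 0 <= fst (Csum n F).
Proof.
  induction n; intros H; simpl. lra.
  assert (0 <= fst (Csum n F)) by (apply IHn; intros; apply H; lia).
  pose proof (H n ltac:(lia)). lra.
Qed.

Lemma exp0'' k s : exp (- k * s + k * s) = 1.
Proof. replace (- k * s + k * s) with 0 by ring. apply exp_0. Qed.

Lemma energy S y f fp d s0 b s P1 Q1 P2 Q2 : 0 < y -> is_solution S (0, y) f fp d ->
  (d = RtoC 0 \/ f 0 = RtoC 0) -> 0 <= s0 ->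
  (forall x, s0 < x < Rb S -> wf S x = 0 /\ rho S x = b) -> 0 < b ->
  (forall j, (j < npts S)%nat -> pts S j < s0) -> s0 < s < Rb S ->
  (forall t, s <= t <= Rb S -> fst (f t) = Ec (y * b) s P1 Q1 t) ->
  (forall t, s <= t <= Rb S -> snd (f t) = Ec (y * b) s P2 Q2 t) ->
  exists A0, is_RInt (fun t => fst (fp t) * fst (fp t) + snd (fp t) * snd (fp t)) 0 s A0 /\
    0 <= A0 /\ A0 <= (y * b) * (P1 * P1 + P2 * P2 - (Q1 * Q1 + Q2 * Q2)).
Proof.
  intros Hy [H1f Heq] Hd Hs0 Hreg Hb Hpts Hs Hf1 Hf2.
  set (K := Rb S). assert (HK : K = Rb S) by reflexivity. clearbody K. set (k := y * b). assert (Hk : 0 < k) by (unfold k; nra).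
  destruct (Heq (hE f s K) (hpE fp f s K) K ltac:(lra) (hE_H1 f fp s K H1f ltac:(lra)))
    as (A & B & D & HA & HB & HD & E).
  { intros x Hx. unfold hE. dec; try reflexivity. assert (Hx2 : x = K) by lra. rewrite Hx2. apply Cx_ext; simpl; field; lra. }
  apply (f_equal (cp true)) in E.
  rewrite !cp_add, cp_zz, cp_add in E.
  assert (E0 : cp true (Cmul d (hE f s K 0)) = 0).
  { unfold hE. dec. destruct Hd as [-> | Hf0]. simpl; ring. rewrite Hf0. simpl; ring. }
  rewrite E0 in E.
  assert (HBs : snd B = 0).
  { pose proof (CInt_cp _ _ _ _ HB false) as HBc.
    destruct (iR_split _ 0 s K _ ltac:(lra) HBc) as (b1 & b2 & Hb1 & Hb2 & Eb).
    assert (b1 = 0 * (s - 0)).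
    { eapply iR_const_val; [lra| |exact Hb1]. intros x Hx. unfold hE, hpE. dec. simpl. ring. }
    assert (b2 = 0 * (K - s)).
    { eapply iR_const_val; [lra| |exact Hb2]. intros x Hx.
      destruct (Hreg x ltac:(lra)) as [Hw _]. cbv beta. rewrite Hw. simpl. ring. }
    simpl in Eb. lra. }
  assert (EB : cp true (Cmul (0, y) (Defs.Copp B)) = 0) by (simpl; rewrite HBs; ring).
  rewrite EB in E.
  match type of E with context [cp true (Csum ?n ?F)] => set (Sg := cp true (Csum n F)) in E end.
  assert (HSg : 0 <= Sg).
  { unfold Sg. simpl. apply Csum_fst_nonneg. intros j Hj.
    pose proof (Hpts j Hj). pose proof (masses_nonneg S j Hj).
    unfold hE. dec. simpl. set (u := f (pts S j)).
    replace (masses S j * (fst u * fst u - snd u * - snd u) - 0 * (fst u * - snd u + snd u * fst u))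
      with (masses S j * (fst u * fst u + snd u * snd u)) by ring.
    apply Rmult_le_pos; nra. }
  pose proof (CInt_cp _ _ _ _ HD true) as HDc.
  destruct (iR_split _ 0 s K _ ltac:(lra) HDc) as (D0 & D1 & HD0 & HD1 & ED).
  assert (HD0p : 0 <= D0).
  { eapply (iR_nonneg _ 0 s); [lra| |exact HD0]. intros x Hx. unfold hE. dec. simpl.
    set (u := f x). set (rr := rho S x).
    replace (rr * rr * (fst u * fst u - snd u * - snd u) - 0 * (fst u * - snd u + snd u * fst u))
      with ((rr * rr) * (fst u * fst u + snd u * snd u)) by ring.
    apply Rmult_le_pos; nra. }
  set (F1 := fst (f s)). set (F2 := snd (f s)).
  set (q1 := - (k * s)). set (q2 := k * s).
  pose proof (exp_lin2 k q1 q2 (- P1) (- Q1) K s K ltac:(lra)) as I1.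
  pose proof (exp_lin2 k q1 q2 (- P2) (- Q2) K s K ltac:(lra)) as I2.
  pose proof (iR_scal _ _ _ (b * b / (K - s)) _ (iR_plus _ _ _ _ _ _ (iR_scal _ _ _ F1 _ I1) (iR_scal _ _ _ F2 _ I2))) as I12.
  match type of I12 with is_RInt _ _ _ ?v => assert (ED1 : D1 = v) end.
  { eapply (iR_ext_val _ _ s K); [lra| |exact HD1|exact I12].
    intros x Hx. cbv beta. unfold hE. dec. destruct (Hreg x ltac:(lra)) as [_ Hr]. rewrite Hr.
    simpl. rewrite (Hf1 x), (Hf2 x) by lra. unfold Ec, F1, F2, q1, q2, k. field. lra. }
  pose proof (CInt_cp _ _ _ _ HA true) as HAc.
  destruct (iR_split _ 0 s K _ ltac:(lra) HAc) as (A0 & A1 & HA0 & HA1 & EA).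
  assert (HA0' : is_RInt (fun t => fst (fp t) * fst (fp t) + snd (fp t) * snd (fp t)) 0 s A0).
  { eapply iR_ext; [lra| |exact HA0]. intros x Hx. unfold hpE. dec. simpl. ring. }
  assert (HA0p : 0 <= A0).
  { eapply (iR_nonneg _ 0 s); [lra| |exact HA0']. intros x Hx. nra. }
  pose proof (iR_scal _ _ _ (-1 / (K - s)) _ (iR_plus _ _ _ _ _ _
     (iR_scal _ _ _ F1 _ (H1_seg f fp H1f true s K ltac:(lra)))
     (iR_scal _ _ _ F2 _ (H1_seg f fp H1f false s K ltac:(lra))))) as J12.
  match type of J12 with is_RInt _ _ _ ?v => assert (EA1 : A1 = v) end.
  { eapply (iR_ext_val _ _ s K); [lra| |exact HA1|exact J12].
    intros x Hx. cbv beta. unfold hpE. dec. simpl. unfold F1, F2. field. lra. }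
  exists A0. split; auto. split; auto.
  simpl in EA1.
  assert (Key : - A1 - y * y * D1 = k * (P1 * P1 + P2 * P2 - (Q1 * Q1 + Q2 * Q2))).
  { rewrite EA1, ED1. unfold F1, F2.
    rewrite (Hf1 K), (Hf2 K), (Hf1 s), (Hf2 s) by (lra). rewrite !Ec_s.
    unfold Gx, Ec, q1, q2. rewrite exp0', exp0''. unfold k. field. split. lra. nra. }
  assert (0 <= y * y * (D0 + Sg)) by (apply Rmult_le_pos; nra).
  fold k. nra.
Qed.



Lemma Zlem (u W g : R -> R) a b (G2 v : R) : a <= b -> (forall x, a < x < b -> u x * u x <= W x) ->
  is_RInt W a b 0 -> is_RInt (fun x => g x * g x) a b G2 -> is_RInt (fun x => u x * g x) a b v -> v = 0.
Proof.
  intros Hab HW IW IG Iv.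
  assert (HG2 : 0 <= G2) by (eapply (iR_nonneg _ a b); [lra| |exact IG]; intros; nra).
  assert (Hb : forall eps, 0 < eps -> Rabs v <= eps * G2 / 2).
  { intros eps He.
    assert (Iup : is_RInt (fun x => (eps * (g x * g x) + / eps * W x) / 2) a b ((eps * G2 + / eps * 0) / 2)).
    { apply (iR_ext (fun x => / 2 * (eps * (g x * g x) + / eps * W x))); auto. intros; cbv beta; field; lra.
      replace ((eps * G2 + / eps * 0) / 2) with (/ 2 * (eps * G2 + / eps * 0)) by (field; lra).
      apply iR_scal. apply iR_plus; apply iR_scal; auto. }
    assert (Pt : forall x, a < x < b -> Rabs (u x * g x) <= (eps * (g x * g x) + / eps * W x) / 2).
    { intros x Hx. pose proof (HW x Hx).
      assert (E1 : eps * (g x * g x) + / eps * (u x * u x) - 2 * (u x * g x) = (eps * g x - u x) * (eps * g x - u x) / eps) by (field; lra).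
      assert (E2 : eps * (g x * g x) + / eps * (u x * u x) + 2 * (u x * g x) = (eps * g x + u x) * (eps * g x + u x) / eps) by (field; lra).
      assert (0 <= (eps * g x - u x) * (eps * g x - u x) / eps).
      { unfold Rdiv; apply Rmult_le_pos; [apply Rle_0_sqr | left; apply Rinv_0_lt_compat; lra]. }
      assert (0 <= (eps * g x + u x) * (eps * g x + u x) / eps).
      { unfold Rdiv; apply Rmult_le_pos; [apply Rle_0_sqr | left; apply Rinv_0_lt_compat; lra]. }
      assert (/ eps * (u x * u x) <= / eps * W x).
      { apply Rmult_le_compat_l; auto. left; apply Rinv_0_lt_compat; auto. }
      apply Rabs_le. split; lra. }
    apply Rabs_le. split.
    - assert (-1 * ((eps * G2 + / eps * 0) / 2) <= v).
      { eapply (iR_le _ _ a b); [lra| |apply (iR_scal _ _ _ (-1)) in Iup; exact Iup|exact Iv].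
        intros x Hx. cbv beta. pose proof (Pt x Hx) as P. pose proof (Rle_abs (u x * g x)). pose proof (Rabs_maj2 (u x * g x)). lra. }
      lra.
    - assert (v <= (eps * G2 + / eps * 0) / 2).
      { eapply (iR_le _ _ a b); [lra| |exact Iv|exact Iup].
        intros x Hx. cbv beta. pose proof (Pt x Hx) as P. pose proof (Rle_abs (u x * g x)). pose proof (Rabs_maj2 (u x * g x)). lra. }
      lra. }
  destruct (Req_dec v 0) as [|Hv]; auto. exfalso.
  assert (Hav : 0 < Rabs v) by (apply Rabs_pos_lt; auto).
  pose proof (Hb (Rabs v / (G2 + 1)) ltac:(apply Rdiv_lt_0_compat; lra)) as H.
  assert (Rabs v / (G2 + 1) * G2 / 2 < Rabs v).
  { apply (Rmult_lt_reg_r (2 * (G2 + 1))). lra. field_simplify; try lra. nra. }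
  lra.
Qed.

Lemma W_sub (W : R -> R) s a b : (forall x, 0 < x < s -> 0 <= W x) -> is_RInt W 0 s 0 ->
  0 <= a <= b -> b <= s -> is_RInt W a b 0.
Proof.
  intros Hp I Hab Hbs.
  destruct (iR_split _ 0 a s _ ltac:(lra) I) as (v1 & v2 & I1 & I2 & E).
  destruct (iR_split _ a b s _ ltac:(lra) I2) as (v3 & v4 & I3 & I4 & E').
  assert (0 <= v1) by (eapply (iR_nonneg _ 0 a); [lra| |exact I1]; intros; apply Hp; lra).
  assert (0 <= v3) by (eapply (iR_nonneg _ a b); [lra| |exact I3]; intros; apply Hp; lra).
  assert (0 <= v4) by (eapply (iR_nonneg _ b s); [lra| |exact I4]; intros; apply Hp; lra).
  replace 0 with v3 by lra. auto.
Qed.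

Definition ramp dl t := if Rle_dec t dl then (dl - t) / dl else 0.
Definition rampp dl t := if Rlt_dec t dl then -1 / dl else 0.

Lemma ramp_H1 dl : 0 < dl -> H1loc (fun t => RtoC (ramp dl t)) (fun t => RtoC (rampp dl t)).
Proof.
  intros Hd. apply H1_real. intros X HX.
  assert (R0 : ramp dl 0 = 1) by (unfold ramp; dec; field; lra).
  rewrite R0. destruct (Rle_dec X dl).
  - replace (ramp dl X - 1) with (-1/dl * (X - 0)) by (unfold ramp; dec; field; lra).
    apply iR_pc. lra. intros x Hx. unfold rampp. dec.
  - replace (ramp dl X - 1) with (-1/dl * (dl - 0) + 0 * (X - dl)) by (unfold ramp; dec; field; lra).
    apply iR_chasles with dl; apply iR_pc; try lra; intros x Hx; unfold rampp; dec.
Qed.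

Lemma f_const f fp s : H1loc f fp -> 0 < s ->
  is_RInt (fun t => fst (fp t) * fst (fp t) + snd (fp t) * snd (fp t)) 0 s 0 ->
  forall c x, 0 <= x <= s -> cp c (f x) = cp c (f 0).
Proof.
  intros H1 Hs IW c x Hx.
  assert (IWx : is_RInt (fun t => fst (fp t) * fst (fp t) + snd (fp t) * snd (fp t)) 0 x 0).
  { apply (W_sub _ s); auto. intros; nra. lra. lra. }
  pose proof (H1_seg f fp H1 c 0 x ltac:(lra)) as I.
  assert (v0 : cp c (f x) - cp c (f 0) = 0).
  { eapply (Zlem (fun t => cp c (fp t)) _ (fun _ => 1) 0 x (1 * (x - 0))); [lra| |exact IWx| |].
    - intros t Ht. destruct c; simpl; nra.
    - eapply iR_ext; [lra| |apply (iR_const 1)]. intros; simpl; ring.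
    - eapply iR_ext; [lra| |exact I]. intros; simpl; ring. }
  lra.
Qed.

Lemma nondeg S y f fp d s0 s t1 a0 : 0 < y -> is_solution S (0, y) f fp d ->
  ((d = RtoC 0 /\ f 0 = RtoC 1) \/ (d = RtoC 1 /\ f 0 = RtoC 0)) -> 0 <= s0 ->
  (forall j, (j < npts S)%nat -> 0 <= pts S j < s0) -> s0 < s -> 0 < t1 ->
  (forall x, 0 < x < t1 -> wf S x = a0) ->
  is_RInt (fun t => fst (fp t) * fst (fp t) + snd (fp t) * snd (fp t)) 0 s 0 ->
  fst (f s) = 0 -> snd (f s) = 0 -> False.
Proof.
  intros Hy [H1f Heq] Hd Hs0 Hpts Hs Ht1 Hw IW F1 F2.
  pose proof (f_const f fp s H1f ltac:(lra) IW) as Hc.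
  destruct Hd as [[Hd0 Hf0] | [Hd1 Hf0]].
  - pose proof (Hc true s ltac:(lra)). rewrite Hf0 in H. simpl in H. lra.
  - assert (Hz : forall c x, 0 <= x <= s -> cp c (f x) = 0).
    { intros c x Hx. rewrite (Hc c x Hx), Hf0. destruct c; reflexivity. }
    set (dl := Rmin t1 s / 2).
    assert (Hdl : 0 < dl) by (unfold dl; apply Rmin_case; lra).
    assert (Hdl1 : dl < t1) by (unfold dl; pose proof (Rmin_l t1 s); lra).
    assert (Hdl2 : dl < s) by (unfold dl; pose proof (Rmin_r t1 s); lra).
    destruct (Heq (fun t => RtoC (ramp dl t)) (fun t => RtoC (rampp dl t)) dl ltac:(lra) (ramp_H1 dl Hdl))
      as (A & B & D & HA & HB & HD & E).
    { intros x Hx. unfold ramp. dec; try reflexivity. assert (Hx2 : x = dl) by lra. rewrite Hx2.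
      apply Cx_ext; simpl; field; lra. }
    apply (f_equal (cp true)) in E.
    rewrite !cp_add, cp_zz, cp_add in E.
    rewrite Csum_zero_cp in E.
    2:{ intros j Hj. pose proof (Hpts j Hj). pose proof (Hz true (pts S j) ltac:(lra)).
        pose proof (Hz false (pts S j) ltac:(lra)). simpl in *. rewrite H0, H1. split; ring. }
    assert (EL : cp true (Cmul d (RtoC (ramp dl 0))) = 1).
    { rewrite Hd1. unfold ramp. dec. simpl. field. lra. }
    rewrite EL in E.
    assert (EA : cp true A = 0).
    { pose proof (CInt_cp _ _ _ _ HA true) as HAc.
      assert (X : cp true A = -1/dl * (cp true (f dl) - cp true (f 0))).
      { eapply (iR_ext_val _ _ 0 dl); [lra| |exact HAc|apply iR_scal; apply (H1_seg f fp H1f true 0 dl); lra].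
        intros x Hx. cbv beta. unfold rampp. dec. simpl. ring. }
      rewrite X, (Hz true dl), (Hz true 0) by lra. ring. }
    assert (ED : cp true D = 0).
    { pose proof (CInt_cp _ _ _ _ HD true) as HDc.
      assert (cp true D = 0 * (dl - 0)). eapply iR_const_val; [lra| |exact HDc].
      intros x Hx. pose proof (Hz true x ltac:(lra)). pose proof (Hz false x ltac:(lra)). simpl in *.
      rewrite H, H0. ring. lra. }
    assert (EB : snd B = 0).
    { pose proof (CInt_cp _ _ _ _ HB false) as HBc.
      assert (IG : is_RInt (fun x => (a0 * ramp dl x) * (a0 * ramp dl x)) 0 dl
                      (RInt.RInt (fun x => (a0 * ((dl - x) / dl)) * (a0 * ((dl - x) / dl))) 0 dl)).
      { eapply iR_ext; [lra| |apply RC; apply (ex_RInt_continuous (V:=R_CompleteNormedModule))].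
        intros x Hx. unfold ramp. dec.
        intros z _. apply (ex_derive_continuous (K:=R_AbsRing) (V:=R_NormedModule)). auto_derive. lra. }
      eapply (Zlem (fun t => snd (fp t)) (fun t => fst (fp t) * fst (fp t) + snd (fp t) * snd (fp t))
        (fun x => a0 * ramp dl x) 0 dl); [lra| | |exact IG|].
      - intros; nra.
      - apply (W_sub _ s); auto. intros; nra. lra. lra.
      - eapply iR_ext; [lra| |exact HBc]. intros x Hx. cbv beta.
        rewrite (Hw x) by lra. pose proof (Hz true x ltac:(lra)). pose proof (Hz false x ltac:(lra)).
        simpl in *. rewrite H, H0. ring. }
    simpl in E. rewrite EB in E. simpl in EA, ED. rewrite EA, ED in E. lra.
Qed.



Lemma ratio_est y b X P1 P2 Q1 Q2 : 0 < y -> 0 < b -> 0 < X -> 4 <= X * X ->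
  0 < P1 * P1 + P2 * P2 -> Q1 * Q1 + Q2 * Q2 <= P1 * P1 + P2 * P2 ->
  Cnorm (Csub (Cdiv (y * b * (P1 * X - Q1 * / X), y * b * (P2 * X - Q2 * / X))
                    (Cmul (0, y) (P1 * X + Q1 * / X, P2 * X + Q2 * / X))) (0, - b))
    <= 4 * b * (/ X * / X).
Proof.
  intros Hy Hb HX HX4 HP HQ.
  set (Xi := / X). assert (HXi : X * Xi = 1) by (unfold Xi; field; lra).
  assert (HXi0 : 0 < Xi) by (unfold Xi; apply Rinv_0_lt_compat; lra).
  set (F1 := P1 * X + Q1 * Xi). set (F2 := P2 * X + Q2 * Xi).
  set (p2 := P1 * P1 + P2 * P2). set (q2 := Q1 * Q1 + Q2 * Q2). set (pq := P1 * Q1 + P2 * Q2).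
  assert (CS : pq * pq <= p2 * q2).
  { assert (E : p2 * q2 - pq * pq = (P1 * Q2 - P2 * Q1) * (P1 * Q2 - P2 * Q1)) by (unfold p2, q2, pq; ring).
    pose proof (Rle_0_sqr (P1 * Q2 - P2 * Q1)). unfold Rsqr in *. lra. }
  assert (Hp2 : 0 < p2) by (unfold p2; lra).
  assert (Hq2 : q2 <= p2) by (unfold q2, p2; lra).
  assert (Hq20 : 0 <= q2) by (unfold q2; nra).
  assert (Hpq : - p2 <= pq).
  { assert (H1 : p2 * q2 <= p2 * p2) by (apply Rmult_le_compat_l; lra).
    destruct (Rle_dec (- p2) pq) as [|Hn]; auto. exfalso.
    assert (H2 : p2 * p2 < pq * pq) by nra. lra. }
  assert (HF : F1 * F1 + F2 * F2 = p2 * (X * X) + 2 * pq + q2 * (Xi * Xi)).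
  { transitivity (p2 * (X * X) + 2 * pq * (X * Xi) + q2 * (Xi * Xi)).
    unfold F1, F2, p2, pq, q2. ring. rewrite HXi. ring. }
  assert (HF2 : p2 * (X * X) / 2 <= F1 * F1 + F2 * F2).
  { rewrite HF. assert (0 <= q2 * (Xi * Xi)) by (unfold q2; apply Rmult_le_pos; nra). nra. }
  assert (HFpos : 0 < F1 * F1 + F2 * F2) by nra.
  set (Dn := Cmul (0, y) (F1, F2)).
  set (d2 := fst Dn * fst Dn + snd Dn * snd Dn).
  assert (Ed2 : d2 = y * y * (F1 * F1 + F2 * F2)) by (unfold d2, Dn; simpl; ring).
  assert (Hd2 : 0 < d2) by (rewrite Ed2; apply Rmult_lt_0_compat; nra).
  set (Nc := (-2 * (y * b) * Q1 * Xi, -2 * (y * b) * Q2 * Xi)).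
  assert (EW : Csub (Cdiv (y * b * (P1 * X - Q1 * Xi), y * b * (P2 * X - Q2 * Xi)) Dn) (0, - b)
               = Cmul Nc (Defs.Cinv Dn)).
  { apply Cx_ext; unfold Csub, Cdiv, Cadd, Defs.Copp, Cmul, Defs.Cinv; fold d2; simpl;
    unfold Nc, Dn in *; simpl in *; rewrite Ed2; assert (NZ : y * y * (F1 * F1 + F2 * F2) <> 0) by lra; unfold F1, F2 in *; field; split; try lra; intro Z; rewrite Z in NZ; apply NZ; ring. }
  rewrite EW.
  assert (EN : Cnorm (Cmul Nc (Defs.Cinv Dn)) = sqrt ((fst Nc * fst Nc + snd Nc * snd Nc) / d2)).
  { unfold Cnorm. f_equal. unfold Cmul, Defs.Cinv. fold d2. simpl. rewrite Ed2. field. split; lra. }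
  rewrite EN.
  assert (Hb4 : 0 <= 4 * b * (Xi * Xi)) by (apply Rmult_le_pos; nra).
  rewrite <- (sqrt_Rsqr (4 * b * (Xi * Xi))) by auto.
  apply sqrt_le_1_alt. unfold Rsqr.
  assert (ENc : fst Nc * fst Nc + snd Nc * snd Nc = 4 * (y * b) * (y * b) * q2 * (Xi * Xi)) by (unfold Nc, q2; simpl; ring).
  rewrite ENc. apply (Rmult_le_reg_r d2); auto. unfold Rdiv. rewrite Rmult_assoc, Rinv_l, Rmult_1_r by lra.
  rewrite Ed2.
  assert (Hk : y * y * (p2 * (X * X) / 2) <= y * y * (F1 * F1 + F2 * F2)) by (apply Rmult_le_compat_l; nra).
  assert (HX2 : X * X * (Xi * Xi) = 1) by (transitivity ((X * Xi) * (X * Xi)); [ring| rewrite HXi; ring]).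
  assert (T : 4 * (y * b) * (y * b) * q2 * (Xi * Xi) <= 4 * b * (Xi * Xi) * (4 * b * (Xi * Xi)) * (y * y * (p2 * (X * X) / 2))).
  { transitivity (4 * (y * b) * (y * b) * p2 * (Xi * Xi)).
    - apply Rmult_le_compat_r. nra. apply Rmult_le_compat_l. nra. auto.
    - replace (4 * b * (Xi * Xi) * (4 * b * (Xi * Xi)) * (y * y * (p2 * (X * X) / 2)))
        with (8 * (y * b) * (y * b) * p2 * (Xi * Xi) * (X * X * (Xi * Xi))) by field.
      rewrite HX2. assert (0 <= (y * b) * (y * b) * p2 * (Xi * Xi)) by (repeat apply Rmult_le_pos; nra). nra. }
  eapply Rle_trans. exact T. apply Rmult_le_compat_l. nra. exact Hk.
Qed.

Lemma cp_norm c u : Rabs (cp c u) <= Cnorm u.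
Proof.
  unfold Cnorm. rewrite <- sqrt_Rsqr_abs. apply sqrt_le_1_alt. unfold Rsqr.
  destruct c; simpl; nra.
Qed.

Lemma cp_sub c u v : cp c (Csub u v) = cp c u - cp c v.
Proof. destruct c; simpl; ring. Qed.

Lemma Ec_deriv k s P Q x : derivable_pt_lim (Ec k s P Q) x
  (k * (P * exp (k * x + - (k * s)) - Q * exp (- k * x + k * s))).
Proof.
  apply is_derive_Reals. unfold Ec. auto_derive. auto. ring.
Qed.

Lemma qd_Rb S y f g s b P Q c : 0 < y -> quasi_deriv S (0, y) f g -> 0 < s < Rb S ->
  (forall x, s < x < Rb S -> wf S x = 0) ->
  (forall t, s <= t <= Rb S -> cp c (f t) = Ec (y * b) s P Q t) ->
  cp c (g (Rb S)) = y * b * (P * exp (y * b * Rb S + - (y * b * s)) - Q * exp (- (y * b) * Rb S + y * b * s)).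
Proof.
  intros Hy [Hlc Hint] Hs Hw Hf.
  set (k := y * b) in *. set (Rb' := Rb S) in *.
  set (F' := k * (P * exp (k * Rb' + - (k * s)) - Q * exp (- k * Rb' + k * s))).
  set (L := cp c (g Rb')).
  destruct (Req_dec L F') as [E|Hne]; [exact E|exfalso].
  set (e := Rabs (L - F') / 3).
  assert (He : 0 < e) by (unfold e; apply Rmult_lt_0_compat; [apply Rabs_pos_lt; lra | lra]).
  destruct (Hlc Rb' ltac:(lra) e He) as (del1 & Hd1 & Hc1).
  destruct (Ec_deriv k s P Q Rb' e He) as (del2 & Hc2).
  set (m := Rmin (Rmin del1 del2) (Rb' - s) / 2).
  pose proof (cond_pos del2) as Hd2.
  assert (Hm0 : 0 < m).
  { unfold m. assert (0 < Rmin (Rmin del1 del2) (Rb' - s)). apply Rmin_pos. apply Rmin_pos; lra. lra. lra. }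
  assert (Hm1 : m < del1) by (unfold m; pose proof (Rmin_l (Rmin del1 del2) (Rb' - s)); pose proof (Rmin_l del1 del2); lra).
  assert (Hm2 : m < del2) by (unfold m; pose proof (Rmin_l (Rmin del1 del2) (Rb' - s)); pose proof (Rmin_r del1 del2); lra).
  assert (Hm3 : m < Rb' - s) by (unfold m; pose proof (Rmin_r (Rmin del1 del2) (Rb' - s)); lra).
  set (t := Rb' - m).
  destruct (Hint t Rb' ltac:(unfold t in *; lra)) as (J & HJ & HG).
  assert (HJ0 : cp true J = 0 /\ cp false J = 0).
  { split; [pose proof (CInt_cp _ _ _ _ HJ true) as HJc | pose proof (CInt_cp _ _ _ _ HJ false) as HJc];
    (assert (X : cp _ J = 0 * (Rb' - t)) by (eapply iR_const_val; [unfold t; lra | | exact HJc];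
       intros x Hx; cbv beta; rewrite cp_Rmul, Hw by (unfold t in *; lra); ring)); lra. }
  pose proof (CInt_cp _ _ _ _ HG c) as HGc.
  assert (EV : cp c (Cadd (Csub (f Rb') (f t)) (Cmul (0, y) J)) = cp c (f Rb') - cp c (f t)).
  { destruct HJ0 as [J1 J2]. destruct c; simpl in *; rewrite J1, J2; ring. }
  rewrite EV in HGc.
  assert (Hup : cp c (f Rb') - cp c (f t) <= (L + e) * (Rb' - t)).
  { eapply (iR_le _ _ t Rb'); [unfold t; lra| |exact HGc|apply iR_const].
    intros x Hx. pose proof (Hc1 x ltac:(unfold t in Hx; lra)) as H.
    pose proof (cp_norm c (Csub (g x) (g Rb'))) as H2. rewrite cp_sub in H2. fold L in H2.
    pose proof (Rle_abs (cp c (g x) - L)). lra. }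
  assert (Hlo : (L - e) * (Rb' - t) <= cp c (f Rb') - cp c (f t)).
  { eapply (iR_le _ _ t Rb'); [unfold t; lra| |apply iR_const|exact HGc].
    intros x Hx. pose proof (Hc1 x ltac:(unfold t in Hx; lra)) as H.
    pose proof (cp_norm c (Csub (g x) (g Rb'))) as H2. rewrite cp_sub in H2. fold L in H2.
    pose proof (Rabs_maj2 (cp c (g x) - L)). lra. }
  pose proof (Hc2 (- m) ltac:(lra) ltac:(rewrite Rabs_Ropp, Rabs_pos_eq; lra)) as H3.
  simpl in H3. replace (Rb' + - m) with t in H3 by (unfold t; ring).
  rewrite <- (Hf t), <- (Hf Rb') in H3 by (unfold t in *; lra).
  fold F' in H3. unfold k in F'.
  assert (Ht : Rb' - t = m) by (unfold t; ring). rewrite Ht in Hup, Hlo.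
  assert (Q1 : Rabs ((cp c (f Rb') - cp c (f t)) / m - L) <= e).
  { apply Rabs_le. split.
    - apply (Rmult_le_reg_r m); auto. unfold Rdiv. field_simplify; lra.
    - apply (Rmult_le_reg_r m); auto. unfold Rdiv. field_simplify; lra. }
  replace ((cp c (f t) - cp c (f Rb')) / - m) with ((cp c (f Rb') - cp c (f t)) / m) in H3 by (field; lra).
  assert (Rabs (L - F') <= 2 * e).
  { replace (L - F') with (((cp c (f Rb') - cp c (f t)) / m - F') - ((cp c (f Rb') - cp c (f t)) / m - L)) by ring.
    eapply Rle_trans. apply Rabs_triang. rewrite Rabs_Ropp. lra. }
  unfold e in H. pose proof (Rabs_pos_lt (L - F') ltac:(lra)). lra.
Qed.



Lemma main_sol S s0 b t1 a0 s y f fp g d : 0 <= s0 < Rb S -> 0 < b ->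
  (forall x, s0 < x < Rb S -> wf S x = 0 /\ rho S x = b) ->
  (forall j, (j < npts S)%nat -> 0 <= pts S j < s0) -> 0 < t1 ->
  (forall x, 0 < x < t1 -> wf S x = a0) -> s0 < s < Rb S -> 0 < y -> 1 <= y * b * (Rb S - s) ->
  is_solution S (0, y) f fp d -> ((d = RtoC 0 /\ f 0 = RtoC 1) \/ (d = RtoC 1 /\ f 0 = RtoC 0)) ->
  quasi_deriv S (0, y) f g ->
  Cnorm (Csub (Cdiv (g (Rb S)) (Cmul (0, y) (f (Rb S)))) (0, - b)) <= 4 * b * exp (- (2 * b * (Rb S - s)) * y).
Proof.
  intros Hs0 Hb Hreg Hpts Ht1 Hw0 Hs Hy HyL Hsol Hd Hq.
  assert (Hpts' : forall j, (j < npts S)%nat -> pts S j < s0) by (intros j Hj; apply (Hpts j Hj)).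
  destruct (sol_explicit S y f fp d s0 b s Hy Hsol ltac:(lra) Hreg Hb Hpts' Hs true) as (P1 & Q1 & HF1).
  destruct (sol_explicit S y f fp d s0 b s Hy Hsol ltac:(lra) Hreg Hb Hpts' Hs false) as (P2 & Q2 & HF2).
  destruct (energy S y f fp d s0 b s P1 Q1 P2 Q2 Hy Hsol ltac:(destruct Hd as [[? ?]|[? ?]]; auto) ltac:(lra)
     Hreg Hb Hpts' Hs HF1 HF2) as (A0 & HA0 & HA0p & HA0le).
  set (k := y * b) in *. assert (Hk : 0 < k) by (unfold k; nra).
  assert (HP : 0 < P1 * P1 + P2 * P2).
  { destruct (Req_dec (P1 * P1 + P2 * P2) 0) as [E|E]; [exfalso|nra].
    assert (P1 = 0) by nra. assert (P2 = 0) by nra.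
    assert (Q1 * Q1 + Q2 * Q2 <= 0).
    { assert (k * (Q1 * Q1 + Q2 * Q2) <= 0) by nra. nra. }
    assert (Q1 = 0) by nra. assert (Q2 = 0) by nra.
    assert (A0 = 0) by nra. subst A0.
    apply (nondeg S y f fp d s0 s t1 a0 Hy Hsol Hd ltac:(lra) Hpts ltac:(lra) Ht1 Hw0 HA0).
    - change (fst (f s)) with (cp true (f s)). rewrite (HF1 s) by lra. rewrite Ec_s. lra.
    - change (snd (f s)) with (cp false (f s)). rewrite (HF2 s) by lra. rewrite Ec_s. lra. }
  assert (HQ : Q1 * Q1 + Q2 * Q2 <= P1 * P1 + P2 * P2).
  { assert (0 <= k * (P1 * P1 + P2 * P2 - (Q1 * Q1 + Q2 * Q2))) by lra.
    destruct (Rle_dec (Q1 * Q1 + Q2 * Q2) (P1 * P1 + P2 * P2)); auto. nra. }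
  assert (Hw : forall x, s < x < Rb S -> wf S x = 0) by (intros x Hx; apply Hreg; lra).
  pose proof (qd_Rb S y f g s b P1 Q1 true Hy Hq ltac:(lra) Hw HF1) as G1.
  pose proof (qd_Rb S y f g s b P2 Q2 false Hy Hq ltac:(lra) Hw HF2) as G2.
  fold k in G1, G2.
  set (X := exp (k * Rb S + - (k * s))).
  assert (HXi : exp (- k * Rb S + k * s) = / X).
  { unfold X. rewrite <- exp_Ropp. f_equal. ring. }
  assert (HX0 : 0 < X) by (unfold X; apply exp_pos).
  assert (HX1 : 2 < X).
  { pose proof (exp_ineq1 1 ltac:(lra)). unfold X.
    assert (exp 1 <= exp (k * Rb S + - (k * s))).
    { destruct (Req_dec 1 (k * Rb S + - (k * s))) as [E|E]. rewrite <- E; lra.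
      left; apply exp_increasing. lra. }
    lra. }
  assert (EG : g (Rb S) = (y * b * (P1 * X - Q1 * / X), y * b * (P2 * X - Q2 * / X))).
  { apply Cx_ext.
    - change (fst (g (Rb S))) with (cp true (g (Rb S))). rewrite G1. fold X. rewrite HXi. simpl. unfold k. ring.
    - change (snd (g (Rb S))) with (cp false (g (Rb S))). rewrite G2. fold X. rewrite HXi. simpl. unfold k. ring. }

  assert (EF : f (Rb S) = (P1 * X + Q1 * / X, P2 * X + Q2 * / X)).
  { apply Cx_ext.
    - change (fst (f (Rb S))) with (cp true (f (Rb S))). rewrite (HF1 (Rb S)) by lra. unfold Ec. fold X. rewrite HXi. simpl. ring.
    - change (snd (f (Rb S))) with (cp false (f (Rb S))). rewrite (HF2 (Rb S)) by lra. unfold Ec. fold X. rewrite HXi. simpl. ring. }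
  assert (EE : exp (- (2 * b * (Rb S - s)) * y) = / X * / X).
  { rewrite <- HXi, <- exp_plus. f_equal. unfold k. ring. }
  rewrite EG, EF, EE.
  apply ratio_est; auto. nra.
Qed.

Theorem lemma5p1 (S : classF) (theta thetap thetaq phi phip phiq : R -> R -> Cx) :
  (forall y, 0 < y ->
     is_solution S (0, y) (theta y) (thetap y) (RtoC 0) /\
     theta y 0 = RtoC 1 /\
     quasi_deriv S (0, y) (theta y) (thetaq y)) ->
  (forall y, 0 < y ->
     is_solution S (0, y) (phi y) (phip y) (RtoC 1) /\
     phi y 0 = RtoC 0 /\
     quasi_deriv S (0, y) (phi y) (phiq y)) ->
  exists eps c M Y : R, 0 < eps /\ 0 < c /\
    forall y, Y <= y ->
      Cnorm (Csub (Cdiv (thetaq y (Rb S)) (Cmul (0, y) (theta y (Rb S)))) (0, - c))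
        <= M * exp (- eps * y) /\
      Cnorm (Csub (Cdiv (phiq y (Rb S)) (Cmul (0, y) (phi y (Rb S)))) (0, - c))
        <= M * exp (- eps * y).
Proof.
  intros Hth Hph.
  destruct (setup S) as (s0 & b & t1 & a0 & Hs0 & Hb & Hreg & Hpts & Ht1 & Hw0).
  set (s := (s0 + Rb S) / 2).
  assert (Hs : s0 < s < Rb S) by (unfold s; lra).
  set (L := Rb S - s). assert (HL : 0 < L) by (unfold L; lra).
  exists (2 * b * L), b, (4 * b), (Rmax 1 (1 / (b * L))).
  split. apply Rmult_lt_0_compat; lra. split. lra.
  intros y Hy.
  assert (Hy1 : 1 <= y) by (eapply Rle_trans; [apply Rmax_l|exact Hy]).
  assert (Hy2 : 1 / (b * L) <= y) by (eapply Rle_trans; [apply Rmax_r|exact Hy]).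
  assert (HbL : 0 < b * L) by (apply Rmult_lt_0_compat; lra).
  assert (HyL : 1 <= y * b * (Rb S - s)).
  { fold L. replace (y * b * L) with (y * (b * L)) by ring.
    apply (Rmult_le_compat_r (b * L)) in Hy2; [|lra].
    replace (1 / (b * L) * (b * L)) with 1 in Hy2 by (field; lra). lra. }
  destruct (Hth y ltac:(lra)) as (S1 & T0 & Q1).
  destruct (Hph y ltac:(lra)) as (S2 & P0 & Q2).
  split.
  - apply (main_sol S s0 b t1 a0 s y _ _ _ _ Hs0 Hb Hreg Hpts Ht1 Hw0 Hs ltac:(lra) HyL S1 (or_introl (conj eq_refl T0)) Q1).
  - apply (main_sol S s0 b t1 a0 s y _ _ _ _ Hs0 Hb Hreg Hpts Ht1 Hw0 Hs ltac:(lra) HyL S2 (or_intror (conj eq_refl P0)) Q2).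
Qed.
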